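(* Let $k\ge 1$, let $\mathcal{F} \subset \binom{[n]}{k}$ with $|\mathcal{F}|=m$, let $0 < \epsilon \leq \frac{1}{2}$ and suppose $n>2 \log \frac{1}{\epsilon}+k$. Suppose that $\beta(\mathcal{F}) \leq (1-\theta)m(n-k)$ for some $0 < \theta \leq 1$. Then there exists a subfamily $S \subset \mathcal{F}$ such that $$|\Gamma(S)| \geq (1-\epsilon) \theta m \quad\text{and}\quad |S| < \Big(20\log\tfrac{1}{\epsilon}\Big) \cdot \frac{m}{n-k} +2\log\frac{1}{\epsilon \theta}.$$
   Context: $\log$ is the natural logarithm. For $\sigma\in\mathcal{F}$, $\beta_{\mathcal{F}}(\sigma)=|\{\tau\in\binom{[n]}{k+1}: \binom{\tau}{k}\cap\mathcal{F}=\{\sigma\}\}|$ (the number of $(k+1)$-sets containing $\sigma$ and no other member of $\mathcal{F}$), and $\beta(\mathcal{F})=\sum_{\sigma\in\mathcal{F}}\beta_{\mathcal{F}}(\sigma)$. For $S\subset\mathcal{F}$, $\Gamma(S)=\{\eta\in\mathcal{F}: |\eta\cap\sigma|=k-1 \text{ for some } \sigma\in S\}$. *)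

(* Defs.v *)
From mathcomp Require Import all_boot all_order all_algebra.
From mathcomp Require Import all_classical all_reals all_analysis.
Set Implicit Arguments. Unset Strict Implicit. Unset Printing Implicit Defensive.

(* beta_F(sigma): number of (k+1)-sets tau containing sigma and no other member
   of F, i.e. the k-subsets of tau lying in F are exactly {sigma}. *)
Definition beta_at (n k : nat) (F : {set {set 'I_n}}) (sigma : {set 'I_n}) : nat :=
  #|[set tau : {set 'I_n} | (#|tau| == k.+1) &&
      ([set eta in F | (eta \subset tau) && (#|eta| == k)] == [set sigma])]|.

Definition beta (n k : nat) (F : {set {set 'I_n}}) : nat :=
  \sum_(sigma in F) beta_at k F sigma.

Definition Gamma (n k : nat) (F S : {set {set 'I_n}}) : {set {set 'I_n}} :=
  [set eta in F | [exists sigma in S, #|eta :&: sigma| == k.-1]].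

(* Main.v *)
Require Import Defs.
From mathcomp Require Import all_boot all_order all_algebra.
From mathcomp Require Import all_classical all_reals all_analysis.
From mathcomp Require Import zify ring lra.
Import Order.TTheory GRing.Theory Num.Theory.
Set Implicit Arguments. Unset Strict Implicit. Unset Printing Implicit Defensive.

Definition Nb (n k : nat) (F : {set {set 'I_n}}) (eta : {set 'I_n}) :=
  [set sigma in F | #|eta :&: sigma| == k.-1].

Lemma Nb_sub n k (F : {set {set 'I_n}}) eta : Nb k F eta \subset F.
Proof. by apply/fintype.subsetP => s; rewrite inE => /andP[]. Qed.

Lemma comb n k (F : {set {set 'I_n}}) eta : (1 <= k)%N ->
  eta \in F -> #|eta| = k -> (n - k <= beta_at k F eta + #|Nb k F eta|)%N.
Proof.
move=> k1 etaF ceta.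
set P := fun tau : {set 'I_n} => [set e in F | (e \subset tau) && (#|e| == k)].
set B := [set tau : {set 'I_n} | (#|tau| == k.+1) && (P tau == [set eta])].
have -> : beta_at k F eta = #|B| by [].
have cX : #|~: eta| = (n - k)%N.
  by have := cardsC eta; rewrite card_ord ceta; lia.
set Bx := [set x | x |: eta \in B].
rewrite -cX -(cardsID Bx (~: eta)).
have ctau : forall x, x \in ~: eta -> #|x |: eta| = k.+1.
  by move=> x; rewrite inE cardsU1 => ->; rewrite ceta.
apply: leq_add.
  rewrite -(@card_in_imset _ _ (fun x => x |: eta)); last first.
    move=> x y; rewrite !inE => /andP[xe _] /andP[ye _] exy.
    have : x \in y |: eta by rewrite -exy setU11.
    by rewrite !inE (negbTE xe) orbF => /eqP.
  apply: subset_leq_card; apply/fintype.subsetP => t /imsetP[x].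
  by rewrite !inE => /andP[_ xB] ->.
have key : forall x, x \in ~: eta :\: Bx ->
  exists e, [/\ e \in Nb k F eta & e :|: eta = x |: eta].
  move=> x; rewrite !inE => /andP[xB xe].
  have ct : #|x |: eta| = k.+1 by apply: ctau; rewrite inE.
  have etaP : eta \in P (x |: eta).
    by rewrite !inE etaF finset.subsetUr ceta eqxx.
  case: (pickP [pred e | e \in P (x |: eta) :\ eta]) => [e|].
    rewrite /= !inE => /and4P[ne eF esub /eqP ce].
    have ee : ~~ (e \subset eta).
      apply/negP => sub; move: ne; suff -> : e == eta by [].
      by rewrite eqEcard sub ceta ce leqnn.
    have eu : e :|: eta = x |: eta.
      apply/eqP; rewrite eqEcard finset.subUset esub finset.subsetUr /= ct.
      have : eta \proper e :|: eta.
        rewrite finset.properEneq finset.subsetUr andbT; apply/negP => /eqP h.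
        by move: ee; rewrite h finset.subsetUl.
      by move/fintype.proper_card; rewrite ceta.
    exists e; split=> //.
    rewrite !inE eF /=; have := cardsUI eta e.
    rewrite finset.setUC eu ct ceta ce => h; apply/eqP; rewrite -subn1; move: h; move: #|eta :&: e| => c h; lia.
  move=> none; exfalso; move: xB; rewrite ct eqxx /=.
  suff -> : P (x |: eta) = [set eta] by rewrite eqxx.
  apply/setP => e; rewrite finset.in_set1.
  have := none e; rewrite /= !inE.
  case: eqP => [-> _|_ /=]; last by move=> ->.
  by have := etaP; rewrite !inE.
pose f x := odflt eta [pick e in Nb k F eta | e :|: eta == x |: eta].
have fP : forall x, x \in ~: eta :\: Bx -> f x \in Nb k F eta /\ f x :|: eta = x |: eta.
  move=> x /key [e [eN eU]]; rewrite /f.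
  case: pickP => [e' /andP[e'N /eqP e'U]|/(_ e)] /=; first by [].
  by rewrite eN eU eqxx.
rewrite -(@card_in_imset _ _ f); last first.
  move=> x y xD yD fxy.
  have [_ hx] := fP x xD; have [_ hy] := fP y yD.
  have : x \in y |: eta by rewrite -hy -fxy hx setU11.
  move: xD; rewrite !inE => /andP[_ xe].
  by rewrite (negbTE xe) orbF => /eqP.
apply: subset_leq_card; apply/fintype.subsetP => t /imsetP[x xD ->].
by have [] := fP x xD.
Qed.

Local Open Scope ring_scope.

Lemma chord (R : realType) (t a : R) (s : nat) : 0 <= t <= 1 -> 0 <= a <= 1 ->
  ((1 - t) + t * a) ^+ s <= (1 - t) + t * a ^+ s.
Proof.
move=> /andP[t0 t1] /andP[a0 a1].
elim: s => [|s IH]; first by rewrite !expr0; lra.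
have p0 : 0 <= a ^+ s by apply: exprn_ge0.
have p1 : a ^+ s <= 1 by apply: exprn_ile1.
set p := a ^+ s in IH p0 p1 *.
have B0 : 0 <= (1 - t) + t * a by nra.
rewrite exprS exprS -/p.
apply: (le_trans (ler_wpM2l B0 IH)).
have h : 0 <= t * (1 - t) * (1 - a) * (1 - p).
  by apply: mulr_ge0; [apply: mulr_ge0; [apply: mulr_ge0|]|]; lra.
nra.
Qed.

Lemma ln_ge1V (R : realType) (y : R) : 0 < y -> 1 - y^-1 <= ln y.
Proof.
move=> y0; have := expR_ge1Dx (- ln y).
rewrite expRN lnK ?posrE //; lra.
Qed.

Lemma per (R : realType) (m L d e eps : R) (s : nat) :
  0 < m -> 0 < L -> 0 <= e -> e <= d -> d <= m -> e <= L -> (1 <= s)%N ->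
  0 <= eps -> eps <= 1 ->
  (L < m -> (1 - L / m) ^+ s <= eps) ->
  (1 - eps) * (e / L) <= 1 - (1 - d / m) ^+ s.
Proof.
move=> m0 L0 e0 ed dm eL s1 eps0 eps1 hB.
have c0 : 0 <= 1 - d / m by rewrite subr_ge0 ler_pdivrMr // mul1r.
have c1 : 1 - d / m <= 1 by rewrite lerBlDr lerDl divr_ge0 //; lra.
have eL1 : e / L <= 1 by rewrite ler_pdivrMr // mul1r.
have eL0 : 0 <= e / L by apply: divr_ge0 => //; lra.
case: (leP m L) => [mL|Lm].
  have hs : (1 - d / m) ^+ s <= 1 - d / m.
    by clear hB; case: s s1 => // s _; rewrite exprS; apply: ler_piMr => //; apply: exprn_ile1.
  have : e / L <= d / m.
    apply: (@le_trans _ _ (e / m)).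
      by apply: ler_wpM2l => //; rewrite lef_pV2 ?posrE.
    by apply: ler_wpM2r => //; rewrite invr_ge0; lra.
  nra.
have hb : (1 - d / m) ^+ s <= (1 - e / m) ^+ s.
  apply: lerXn2r; rewrite ?nnegrE //.
    by rewrite subr_ge0 ler_pdivrMr // mul1r; lra.
  by rewrite lerD2l lerN2; apply: ler_wpM2r => //; rewrite invr_ge0; lra.
have ch := chord s (t := e / L) (a := 1 - L / m).
have : 1 - e / m = (1 - e / L) + (e / L) * (1 - L / m).
  by field; apply/andP; split; apply: lt0r_neq0.
move=> eq; rewrite eq in hb.
have a0 : 0 <= 1 - L / m by rewrite subr_ge0 ler_pdivrMr // mul1r; lra.
have a1 : 1 - L / m <= 1 by rewrite lerBlDr lerDl divr_ge0 //; lra.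
have := ch ltac:(by rewrite eL0 eL1) ltac:(by rewrite a0 a1).
have := hB Lm.
nra.
Qed.

Definition cov n k (S : {set {set 'I_n}}) (eta : {set 'I_n}) : bool :=
  [exists sigma in S, #|eta :&: sigma| == k.-1].

Lemma cov_U1 n k (S : {set {set 'I_n}}) s eta :
  cov k (s |: S) eta = (#|eta :&: s| == k.-1) || cov k S eta.
Proof.
apply/existsP/orP => [[t /andP[]]|].
  rewrite in_setU1 => /orP[/eqP -> ->|tS h]; first by left.
  by right; apply/existsP; exists t; rewrite tS.
case=> [h|/existsP[t /andP[tS h]]]; first by exists s; rewrite setU11.
by exists t; rewrite in_setU1 tS orbT.
Qed.

Definition cc (R : realType) n k (F : {set {set 'I_n}}) eta : R :=
  1 - #|Nb k F eta|%:R / #|F|%:R.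

Definition est (R : realType) n k (F S : {set {set 'I_n}}) (r : nat) : R :=
  \sum_(eta in F) (if cov k S eta then 0 else cc R k F eta ^+ r).

Lemma sum_if_const (R : realType) (T : finType) (A : {set T}) (P : pred T) (a : R) :
  \sum_(i in A) (if P i then a else 0) = a *+ #|[set i in A | P i]|.
Proof.
rewrite -big_mkcondr -sumr_const; apply: eq_bigl => i; by rewrite inE.
Qed.

Lemma est_sum (R : realType) n k (F S : {set {set 'I_n}}) r : (0 < #|F|)%N ->
  \sum_(s in F) est R k F (s |: S) r = #|F|%:R * est R k F S r.+1.
Proof.
move=> m0.
rewrite /est exchange_big mulr_sumr; apply: eq_bigr => eta etaF.
case cS: (cov k S eta).
  by rewrite big1 ?mulr0 // => s _; rewrite cov_U1 cS orbT.
under eq_bigr => s _ do rewrite cov_U1 cS orbF.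
set c := cc R k F eta.
have h1 : \sum_(s in F) (if #|eta :&: s| == k.-1 then 0 else c ^+ r)
  + \sum_(s in F) (if #|eta :&: s| == k.-1 then c ^+ r else 0)
  = \sum_(s in F) c ^+ r.
  by rewrite -big_split; apply: eq_bigr => s _; case: ifP => _ /=; rewrite ?addr0 ?add0r.
rewrite sum_if_const sumr_const in h1.
have e : [set i in F | #|eta :&: i| == k.-1] = Nb k F eta by []. rewrite e in h1.
have -> : \sum_(s in F) (if #|eta :&: s| == k.-1 then 0 else c ^+ r)
   = c ^+ r *+ #|F| - c ^+ r *+ #|Nb k F eta| by rewrite -h1 addrK.
rewrite -[in LHS]mulr_natr -[X in _ - X]mulr_natr -mulrBr exprS /c /cc.
have : (#|F|%:R : R) != 0 by rewrite pnatr_eq0 -lt0n.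
by move=> hm; field.
Qed.

Lemma est_step (R : realType) n k (F S : {set {set 'I_n}}) r : (0 < #|F|)%N ->
  exists2 s, s \in F & est R k F (s |: S) r <= est R k F S r.+1.
Proof.
move=> m0.
case: (boolP [exists s in F, est R k F (s |: S) r <= est R k F S r.+1]).
  by move=> /existsP[s /andP[sF h]]; exists s.
rewrite negb_exists => /forallP hall; exfalso.
have : #|F|%:R * est R k F S r.+1 < \sum_(s in F) est R k F (s |: S) r.
  rewrite mulr_natl -sumr_const; apply: ltr_sum.
    have [s sF] := card_gt0P m0.
    by apply/hasP; exists s; rewrite ?mem_index_enum.
  move=> s sF; have := hall s; rewrite sF /= -ltNge //.
by rewrite est_sum // ltxx.
Qed.

Lemma est_ind (R : realType) n k (F : {set {set 'I_n}}) r : (0 < #|F|)%N ->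
  forall S0 : {set {set 'I_n}}, S0 \subset F -> exists S : {set {set 'I_n}}, [/\ S \subset F, (#|S| <= #|S0| + r)%N &
    #|[set eta in F | ~~ cov k S eta]|%:R <= est R k F S0 r].
Proof.
move=> m0; elim: r => [|r IH] S0 sub.
  exists S0; split => //; first by rewrite addn0.
  rewrite /est; under eq_bigr do rewrite expr0.
  have -> : \sum_(i in F) (if cov k S0 i then 0 else (1:R))
     = \sum_(i in F) (if ~~ cov k S0 i then 1 else 0).
    by apply: eq_bigr => i _; case: (cov k S0 i).
  by rewrite sum_if_const.
have [s sF h] := @est_step R n k F S0 r m0.
have sub' : s |: S0 \subset F by rewrite finset.subUset finset.sub1set sF sub.
have [S [SF cS hS]] := IH _ sub'.
exists S; split => //; last exact: le_trans hS h.
apply: (leq_trans cS); rewrite cardsU1 addnS -addSn leq_add2r.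
by case: (s \in S0).
Qed.

Theorem claim3p2 (R : realType) (n k : nat) (F : {set {set 'I_n}})
  (eps theta : R) :
  (1 <= k)%N ->
  (forall sigma, sigma \in F -> #|sigma| = k) ->
  0 < eps -> eps <= 1 / 2 ->
  (n%:R > 2 * ln (1 / eps) + k%:R) ->
  0 < theta -> theta <= 1 ->
  (beta k F)%:R <= (1 - theta) * #|F|%:R * (n - k)%:R ->
  exists S : {set {set 'I_n}},
    S \subset F /\
    (1 - eps) * theta * #|F|%:R <= #|Gamma k F S|%:R /\
    #|S|%:R < 20 * ln (1 / eps) * (#|F|%:R / (n - k)%:R)
              + 2 * ln (1 / (eps * theta)).
Proof.
move=> k1 Fk eps0 epsh hn th0 th1 hbeta.
have eps1 : eps <= 1 by lra.
have eps1' : 0 <= 1 - eps by lra.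
have lnh : forall y : R, 0 < y -> y^-1 <= 1/2 -> 1/2 <= ln y.
  by move=> y y0 yh; have := ln_ge1V y0; lra.
have l1 : 1/2 <= ln (1 / (eps * theta)).
  apply: lnh; first by rewrite div1r invr_gt0 mulr_gt0.
  rewrite div1r invrK; nra.
have l2 : 1/2 <= ln (1 / eps).
  apply: lnh; first by rewrite div1r invr_gt0.
  by rewrite div1r invrK.
have kn : (k < n)%N by rewrite -(ltr_nat R); lra.
set L := (n - k)%N in hbeta *.
have L0 : (0 < L)%N by rewrite /L subn_gt0.
have L0r : (0 : R) < L%:R by rewrite ltr0n.
case: (posnP #|F|) => [m0|m0].
  exists (finset.set0 : {set {set 'I_n}}); split; first exact: finset.sub0set.
  rewrite m0 cards0 !mulr0; split; first by [].
  lra.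
set m := #|F| in hbeta m0 *.
have m0r : (0 : R) < m%:R by rewrite ltr0n.
set x : R := m%:R * ln (1 / eps) / L%:R.
have x0 : 0 < x by rewrite /x mulr_gt0 // ?invr_gt0 // mulr_gt0 //; lra.
set s := (Num.truncn x).+1.
have [S [SF cS hS]] := @est_ind R n k F s m0 finset.set0 (finset.sub0set F).
exists S; split => //; split; last first.
  rewrite cards0 add0n in cS.
  have sx : s%:R <= x + 1.
    by rewrite /s -addn1 natrD lerD2r truncn_le ltW.
  have e20 : 20 * ln (1 / eps) * (m%:R / L%:R) = 20 * x.
    by rewrite /x; field; rewrite lt0r_neq0.
  rewrite e20; apply: (le_lt_trans (y := s%:R)); first by rewrite ler_nat.
  lra.
have unc : #|Gamma k F S|%:R = m%:R - #|[set eta in F | ~~ cov k S eta]|%:R :> R.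
  have := cardsID [set eta | cov k S eta] F.
  have -> : F :&: [set eta | cov k S eta] = Gamma k F S.
    by apply/setP => eta; rewrite !inE.
  have -> : F :\: [set eta | cov k S eta] = [set eta in F | ~~ cov k S eta].
    by apply/setP => eta; rewrite !inE andbC.
  by move=> h; rewrite /m -h natrD addrK.
have e0 : est R k F finset.set0 s = \sum_(eta in F) cc R k F eta ^+ s.
  apply: eq_bigr => eta _.
  have -> : cov k finset.set0 eta = false.
    by apply/existsP => -[t /andP[]]; rewrite inE.
  by [].
rewrite e0 in hS; rewrite unc.
have hB : (L%:R : R) < m%:R -> (1 - L%:R / m%:R) ^+ s <= eps.
  move=> Lm.
  have a0 : (0 : R) <= 1 - L%:R / m%:R.
    by rewrite subr_ge0 ler_pdivrMr // mul1r; apply: ltW.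
  have a1 : 1 - L%:R / m%:R <= expR (- (L%:R / m%:R)) :> R.
    exact: expR_ge1Dx.
  apply: (le_trans (lerXn2r s _ _ a1)); rewrite ?nnegrE ?expR_ge0 //.
  rewrite -expRM_natl.
  have -> : eps = expR (ln eps) by rewrite lnK ?posrE.
  rewrite ler_expR.
  have lx : x * (L%:R / m%:R) = ln (1 / eps) by rewrite /x; field; rewrite !lt0r_neq0.
  have sx : x <= s%:R by rewrite /s ltW // truncnS_gt.
  have le : ln (1 / eps) <= s%:R * (L%:R / m%:R).
    by rewrite -lx ler_wpM2r // divr_ge0 // ltW.
  have : ln (1 / eps) = - ln eps by rewrite div1r lnV ?posrE.
  lra.
pose ee eta : R := (L - beta_at k F eta)%N%:R.
have per_eta : forall eta, eta \in F ->
    (1 - eps) * (ee eta / L%:R) <= 1 - cc R k F eta ^+ s.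
  move=> eta etaF.
  have hc := comb k1 etaF (Fk eta etaF).
  have dm : (#|Nb k F eta| <= m)%N by apply: subset_leq_card; apply: Nb_sub.
  apply: (per (d := #|Nb k F eta|%:R)) => //.
  - by rewrite /ee ler_nat leq_subLR.
  - by rewrite ler_nat.
  - by rewrite /ee ler_nat leq_subr.
  - by apply: ltW.
have sume : theta * m%:R * L%:R <= \sum_(eta in F) ee eta.
  have : \sum_(eta in F) ((L%:R : R) - (beta_at k F eta)%:R) <= \sum_(eta in F) ee eta.
    apply: ler_sum => eta _; by rewrite /ee lerBlDr -natrD ler_nat addnC -leq_subLR.
  rewrite sumrB sumr_const -natr_sum -/(beta k F) -mulr_natl.
  by move=> h; clear -h hbeta; lra.
have hsum : (1 - eps) * theta * m%:R <= \sum_(eta in F) (1 - cc R k F eta ^+ s).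
  apply: (le_trans _ (ler_sum _ per_eta)).
  rewrite -mulr_sumr -mulr_suml.
  have -> : (1 - eps) * theta * m%:R = (1 - eps) * ((theta * m%:R * L%:R) / L%:R).
    by field; rewrite lt0r_neq0.
  apply: ler_wpM2l => //.
  by apply: ler_wpM2r; rewrite ?invr_ge0 ?ler0n.
rewrite sumrB sumr_const in hsum.
by clear -hsum hS; lra.
Qed.
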